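(* Let $(H,\mathcal F_\bullet H,\mathcal R)$ be a filtered Rota–Baxter Hopf algebra. Then $\mathcal R(P(H))\subset P(H)$ and $(P(H),\mathcal F_\bullet H\cap P(H),\mathcal R|_{P(H)})$ is a filtered Rota–Baxter Lie algebra, where $P(H)$ is the Lie algebra of primitive elements with the filtration $\mathcal F_nP(H)=\mathcal F_nH\cap P(H)$, $n\ge1$.
   Context: A filtered Hopf algebra is a Hopf algebra $H$ (over a field of characteristic zero) with subspaces $H=\mathcal F_0H\supset\mathcal F_1H\supset\cdots$ such that all Hopf structure maps preserve filtrations (with $\mathcal F_n(V\otimes W)=\sum_{i+j=n}\mathcal F_iV\otimes\mathcal F_jW$, $\mathcal F_0\mathbf k=\mathbf k$, $\mathcal F_n\mathbf k=0$ for $n\ge1$) and $\ker\epsilon=\mathcal F_1H$. A Rota–Baxter Hopf algebra is a cocommutative Hopf algebra $H$ with a coalgebra homomorphism $\mathcal R:H\to H$ with $\mathcal R(h)\mathcal R(t)=\mathcal R\big(h_{(1)}\mathcal R(h_{(2)})\,t\,S(\mathcal R(h_{(3)}))\big)$ for all $h,t\in H$; it is filtered if $H$ is a filtered Hopf algebra and $\mathcal R(\mathcal F_nH)\subset\mathcal F_nH$ for all $n\ge0$. $P(H)=\{x:\Delta(x)=x\otimes1+1\otimes x\}$ with the commutator bracket. A filtered Rota–Baxter Lie algebra is a Lie algebra $\mathfrak g$ with subspaces $\mathfrak g=\mathcal F_1\mathfrak g\supset\mathcal F_2\mathfrak g\supset\cdots$, $[\mathcal F_n\mathfrak g,\mathcal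 F_m\mathfrak g]\subset\mathcal F_{n+m}\mathfrak g$, together with a linear map $R$ satisfying $[R(x),R(y)]=R([R(x),y]+[x,R(y)]+[x,y])$ and $R(\mathcal F_n\mathfrak g)\subset\mathcal F_n\mathfrak g$. *)

(* Defs.v *)
(* Hopf algebras over a field K, with tensor products given
   abstractly by their universal property. *)
From HB Require Import structures.
From mathcomp Require Import all_boot all_algebra.
From Stdlib Require Import ClassicalEpsilon.

Set Implicit Arguments.
Unset Strict Implicit.
Unset Printing Implicit Defensive.

Import GRing.Theory.
Local Open Scope ring_scope.

Section HopfDefs.
Variable K : fieldType.

Definition lin (V U : lmodType K) (g : V -> U) : Prop :=
  forall (a : K) (x y : V), g (a *: x + y) = a *: g x + g y.

Definition bilin (V W U : lmodType K) (f : V -> W -> U) : Prop :=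
  (forall w, lin (fun v => f v w)) /\ (forall v, lin (f v)).

Record tensor_product (V W : lmodType K) := TensorProduct {
  tp_carrier :> lmodType K;
  tp_mul : V -> W -> tp_carrier;
  tp_bilin : bilin tp_mul;
  tp_univ : forall (U : lmodType K) (f : V -> W -> U), bilin f ->
    exists! g : tp_carrier -> U, lin g /\ forall v w, g (tp_mul v w) = f v w
}.

(* The linear map T -> U induced by a bilinear map f (junk if f is not bilinear). *)
Definition tlift (V W : lmodType K) (T : tensor_product V W) (U : lmodType K)
    (f : V -> W -> U) : T -> U :=
  epsilon (inhabits (fun _ : T => (0 : U)))
    (fun g : T -> U => lin g /\ forall v w, g (tp_mul T v w) = f v w).
Arguments tlift {V W} T {U} f.
Arguments tp_mul {V W} t.

Variable H : algType K.

Definition subspace (V : lmodType K) (P : V -> Prop) : Prop :=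
  P 0 /\ forall (a : K) (x y : V), P x -> P y -> P (a *: x + y).

Section WithTensors.
Variable T2 : tensor_product H H.
Variable T3 : tensor_product T2 H.

(* multiplication on H (x) H : (a (x) b)(c (x) d) = ac (x) bd *)
Definition tmul2 (s t : T2) : T2 :=
  tlift T2 (fun a b => tlift T2 (fun c d => tp_mul T2 (a * c) (b * d)) t) s.

(* (Delta (x) id) o Delta *)
Definition Delta2 (Delta : H -> T2) (h : H) : T3 :=
  tlift T2 (fun x y => tp_mul T3 (Delta x) y) (Delta h).

(* (id (x) Delta) o Delta, viewed in (H (x) H) (x) H *)
Definition Delta2' (Delta : H -> T2) (h : H) : T3 :=
  tlift T2 (fun x y => tlift T2 (fun y1 y2 => tp_mul T3 (tp_mul T2 x y1) y2) (Delta y))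
    (Delta h).

Definition tlift3 (U : lmodType K) (phi : H -> H -> H -> U) : T3 -> U :=
  tlift T3 (fun s c => tlift T2 (fun a b => phi a b c) s).

Definition is_hopf (Delta : H -> T2) (eps : H -> K) (S : H -> H) : Prop :=
  lin Delta /\
  (forall (a : K) x y, eps (a *: x + y) = a * eps x + eps y) /\
  lin S /\
  (forall h, Delta2 Delta h = Delta2' Delta h) /\
  (forall h, tlift T2 (fun x y => eps x *: y) (Delta h) = h) /\
  (forall h, tlift T2 (fun x y => eps y *: x) (Delta h) = h) /\
  Delta 1 = tp_mul T2 1 1 /\
  (forall x y, Delta (x * y) = tmul2 (Delta x) (Delta y)) /\
  eps 1 = 1 /\
  (forall x y, eps (x * y) = eps x * eps y) /\
  (forall h, tlift T2 (fun x y => S x * y) (Delta h) = (eps h)%:A) /\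
  (forall h, tlift T2 (fun x y => x * S y) (Delta h) = (eps h)%:A).

Definition is_cocommutative (Delta : H -> T2) : Prop :=
  forall h, tlift T2 (fun x y => tp_mul T2 y x) (Delta h) = Delta h.

(* F_n (H (x) H) = sum_{i+j=n} F_i H (x) F_j H *)
Definition tens_filt (F : nat -> H -> Prop) (n : nat) (t : T2) : Prop :=
  exists s : seq (H * H * nat),
    t = \sum_(p <- s) tp_mul T2 p.1.1 p.1.2 /\
    forall p, p \in s -> (p.2 <= n)%N /\ F p.2 p.1.1 /\ F (n - p.2)%N p.1.2.

Definition is_filtered_hopf (Delta : H -> T2) (eps : H -> K) (S : H -> H)
    (F : nat -> H -> Prop) : Prop :=
  is_hopf Delta eps S /\
  (forall n, subspace (F n)) /\
  (forall h, F 0%N h) /\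
  (forall n h, F n.+1 h -> F n h) /\
  (forall i j x y, F i x -> F j y -> F (i + j)%N (x * y)) /\
  (forall n h, F n h -> tens_filt F n (Delta h)) /\
  (forall n h, (1 <= n)%N -> F n h -> eps h = 0) /\
  (forall n h, F n h -> F n (S h)) /\
  (forall h, F 1%N h <-> eps h = 0).

Definition is_RB_hopf (Delta : H -> T2) (eps : H -> K) (S : H -> H)
    (R : H -> H) : Prop :=
  is_hopf Delta eps S /\ is_cocommutative Delta /\
  lin R /\
  (forall h, Delta (R h) = tlift T2 (fun x y => tp_mul T2 (R x) (R y)) (Delta h)) /\
  (forall h, eps (R h) = eps h) /\
  (forall h t, R h * R t =
     R (tlift3 (fun a b c => a * R b * t * S (R c)) (Delta2 Delta h))).

Definition is_filtered_RB_hopf (Delta : H -> T2) (eps : H -> K) (S : H -> H)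
    (F : nat -> H -> Prop) (R : H -> H) : Prop :=
  is_filtered_hopf Delta eps S F /\ is_RB_hopf Delta eps S R /\
  (forall n h, F n h -> F n (R h)).

Definition primitive (Delta : H -> T2) (x : H) : Prop :=
  Delta x = tp_mul T2 x 1 + tp_mul T2 1 x.

End WithTensors.

Definition comm (x y : H) : H := x * y - y * x.

(* (g, Fg, R) is a filtered Rota-Baxter Lie algebra, where g is a subspace of H
   with the commutator bracket, Fg n (n >= 1) its filtration, and R restricted to g. *)
Definition is_filtered_RB_Lie_sub (g : H -> Prop) (Fg : nat -> H -> Prop)
    (R : H -> H) : Prop :=
  subspace g /\
  (forall x y, g x -> g y -> g (comm x y)) /\
  (forall n, (1 <= n)%N -> subspace (Fg n) /\ forall x, Fg n x -> g x) /\
  (forall x, g x -> Fg 1%N x) /\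
  (forall n x, (1 <= n)%N -> Fg n.+1 x -> Fg n x) /\
  (forall n m x y, (1 <= n)%N -> (1 <= m)%N -> Fg n x -> Fg m y ->
     Fg (n + m)%N (comm x y)) /\
  (forall x, g x -> g (R x)) /\
  (forall (a : K) x y, g x -> g y -> R (a *: x + y) = a *: R x + R y) /\
  (forall x y, g x -> g y ->
     comm (R x) (R y) = R (comm (R x) y + comm x (R y) + comm x y)) /\
  (forall n x, (1 <= n)%N -> Fg n x -> Fg n (R x)).

End HopfDefs.

(* Main.v *)
Require Import Defs.
From HB Require Import structures.
From mathcomp Require Import all_boot all_algebra.
From Stdlib Require Import ClassicalEpsilon FunctionalExtensionality.
Set Implicit Arguments.
Unset Strict Implicit.
Unset Printing Implicit Defensive.
Import GRing.Theory.
Local Open Scope ring_scope.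

Lemma lin0 (K : fieldType) (V U : lmodType K) (g : V -> U) : lin g -> g 0 = 0.
Proof.
move=> hg; have h := hg 1 0 0; rewrite !scale1r !addr0 in h.
by apply/(@addrI _ (g 0)); rewrite addr0 -h.
Qed.

Lemma linD (K : fieldType) (V U : lmodType K) (g : V -> U) : lin g ->
  forall x y, g (x + y) = g x + g y.
Proof. by move=> hg x y; have := hg 1 x y; rewrite !scale1r. Qed.

Lemma linZ (K : fieldType) (V U : lmodType K) (g : V -> U) : lin g ->
  forall a x, g (a *: x) = a *: g x.
Proof. by move=> hg a x; have := hg a x 0; rewrite (lin0 hg) !addr0. Qed.

Lemma linN (K : fieldType) (V U : lmodType K) (g : V -> U) : lin g ->
  forall x, g (- x) = - g x.
Proof. by move=> hg x; rewrite -scaleN1r linZ // scaleN1r. Qed.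

Lemma linB (K : fieldType) (V U : lmodType K) (g : V -> U) : lin g ->
  forall x y, g (x - y) = g x - g y.
Proof. by move=> hg x y; rewrite linD // linN. Qed.

Lemma tliftP (K : fieldType) (V W : lmodType K) (T : tensor_product V W)
  (U : lmodType K) (f : V -> W -> U) : bilin f ->
  lin (tlift (T:=T) f) /\ forall v w, tlift (T:=T) f (tp_mul T v w) = f v w.
Proof.
move=> hf; destruct (tp_univ T hf) as [g [Hg _]].
unfold tlift; apply epsilon_spec; exists g; exact Hg.
Qed.

Lemma tlift_lin (K : fieldType) (V W : lmodType K) (T : tensor_product V W)
  (U : lmodType K) (f : V -> W -> U) : bilin f -> lin (tlift (T:=T) f).
Proof. by move=> hf; case: (tliftP T hf). Qed.

Lemma tlift_mul (K : fieldType) (V W : lmodType K) (T : tensor_product V W)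
  (U : lmodType K) (f : V -> W -> U) : bilin f ->
  forall v w, tlift (T:=T) f (tp_mul T v w) = f v w.
Proof. by move=> hf; case: (tliftP T hf). Qed.

Lemma tlift_uniq (K : fieldType) (V W : lmodType K) (T : tensor_product V W)
  (U : lmodType K) (f : V -> W -> U) (g : T -> U) : bilin f -> lin g ->
  (forall v w, g (tp_mul T v w) = f v w) -> forall t, g t = tlift (T:=T) f t.
Proof.
move=> hf hg hgf t; destruct (tp_univ T hf) as [g0 [_ Hu]].
have e1 := Hu g (conj hg hgf).
have e2 := Hu (tlift (T:=T) f) (tliftP T hf).
by rewrite -e1 -e2.
Qed.

Lemma lmod_rearr (K : fieldType) (U : lmodType K) (a b : K) (x1 y1 x2 y2 : U) :
  a *: (b *: x1 + y1) + (b *: x2 + y2) = b *: (a *: x1 + x2) + (a *: y1 + y2).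
Proof. by rewrite !scalerDr !scalerA [b * a]mulrC addrACA. Qed.

Lemma bilin_comb (K : fieldType) (V W U : lmodType K) (f1 f2 : V -> W -> U) a :
  bilin f1 -> bilin f2 -> bilin (fun v w => a *: f1 v w + f2 v w).
Proof.
move=> [h1 h1'] [h2 h2']; split => ? b x y /=.
  by rewrite h1 h2 lmod_rearr.
by rewrite h1' h2' lmod_rearr.
Qed.

Lemma tlift_comb (K : fieldType) (V W : lmodType K) (T : tensor_product V W)
  (U : lmodType K) (f1 f2 : V -> W -> U) a t : bilin f1 -> bilin f2 ->
  tlift (T:=T) (fun v w => a *: f1 v w + f2 v w) t = a *: tlift (T:=T) f1 t + tlift (T:=T) f2 t.
Proof.
move=> h1 h2; symmetry; apply: (tlift_uniq (g := fun t => a *: tlift (T:=T) f1 t + tlift (T:=T) f2 t) (bilin_comb a h1 h2)).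
  move=> b x y; rewrite (tlift_lin (T:=T) h1) (tlift_lin (T:=T) h2).
  by rewrite lmod_rearr.
by move=> v w; rewrite !tlift_mul.
Qed.

Lemma tlift_linP (K : fieldType) (P V W : lmodType K) (T : tensor_product V W)
  (U : lmodType K) (f : P -> V -> W -> U) t :
  (forall p, bilin (f p)) ->
  (forall a p q v w, f (a *: p + q) v w = a *: f p v w + f q v w) ->
  lin (fun p => tlift (T:=T) (f p) t).
Proof.
move=> hb hl a p q /=.
have -> : f (a *: p + q) = (fun v w => a *: f p v w + f q v w).
  by apply: functional_extensionality => v; apply: functional_extensionality => w.
by rewrite tlift_comb.
Qed.

Section TP.
Context (K : fieldType) (V W : lmodType K) (T : tensor_product V W).
Lemma tpAl a x y w : tp_mul T (a *: x + y) w = a *: tp_mul T x w + tp_mul T y w.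
Proof. exact: ((tp_bilin T).1 w a x y). Qed.
Lemma tpAr a x y v : tp_mul T v (a *: x + y) = a *: tp_mul T v x + tp_mul T v y.
Proof. exact: ((tp_bilin T).2 v a x y). Qed.
Lemma tpDl x y w : tp_mul T (x + y) w = tp_mul T x w + tp_mul T y w.
Proof. exact: (linD ((tp_bilin T).1 w)). Qed.
Lemma tpDr x y v : tp_mul T v (x + y) = tp_mul T v x + tp_mul T v y.
Proof. exact: (linD ((tp_bilin T).2 v)). Qed.
Lemma tpBl x y w : tp_mul T (x - y) w = tp_mul T x w - tp_mul T y w.
Proof. exact: (linB ((tp_bilin T).1 w)). Qed.
Lemma tpBr x y v : tp_mul T v (x - y) = tp_mul T v x - tp_mul T v y.
Proof. exact: (linB ((tp_bilin T).2 v)). Qed.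
Lemma tp0l w : tp_mul T 0 w = 0.
Proof. exact: (lin0 ((tp_bilin T).1 w)). Qed.
Lemma tp0r v : tp_mul T v 0 = 0.
Proof. exact: (lin0 ((tp_bilin T).2 v)). Qed.
End TP.

Lemma tlift3_mul (K : fieldType) (H : algType K) (T2 : tensor_product H H)
  (T3 : tensor_product T2 H) (U : lmodType K) (phi : H -> H -> H -> U) :
  (forall c, bilin (fun a b => phi a b c)) -> (forall a b, lin (phi a b)) ->
  (bilin (fun s c => tlift (T:=T2) (fun a b => phi a b c) s)) /\
  forall a b c, tlift3 (T3:=T3) phi (tp_mul T3 (tp_mul T2 a b) c) = phi a b c.
Proof.
move=> hb hl.
have hB : bilin (fun s c => tlift (T:=T2) (fun a b => phi a b c) s).
  split=> [c|s]; first exact: tlift_lin.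
  apply: (tlift_linP (f := fun c a b => phi a b c)) => // a' p q v w.
  exact: hl.
split=> // a b c; rewrite /tlift3 tlift_mul // tlift_mul //.
Qed.

Lemma tmul2_facts (K : fieldType) (H : algType K) (T2 : tensor_product H H) :
  (forall a b c d, tmul2 (tp_mul T2 a b) (tp_mul T2 c d) = tp_mul T2 (a * c) (b * d)) /\
  (forall t : T2, lin (fun s : T2 => tmul2 s t)) /\ (forall s, lin (@tmul2 _ _ T2 s)).
Proof.
have hin : forall a b, bilin (fun c d => tp_mul T2 (a * c) (b * d)).
  move=> a b; split=> [w|v] a' x y /=.
    by rewrite mulrDr -scalerAr tpAl.
  by rewrite mulrDr -scalerAr tpAr.
have hout : forall t, bilin (fun a b => tlift (T:=T2) (fun c d => tp_mul T2 (a * c) (b * d)) t).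
  move=> t; split=> [w|v].
    apply: (tlift_linP (f := fun a c d => tp_mul T2 (a * c) (w * d))) => // a' p q v' w'.
    by rewrite mulrDl -scalerAl tpAl.
  apply: (tlift_linP (f := fun b c d => tp_mul T2 (v * c) (b * d))) => // a' p q v' w'.
  by rewrite mulrDl -scalerAl tpAr.
split; last split.
- by move=> a b c d; rewrite /tmul2 tlift_mul // tlift_mul.
- by move=> t; rewrite /tmul2; apply: tlift_lin.
- move=> s a t1 t2; rewrite /tmul2.
  have -> : (fun a0 b => tlift (T:=T2) (fun c d => tp_mul T2 (a0 * c) (b * d)) (a *: t1 + t2))
     = (fun a0 b => a *: tlift (T:=T2) (fun c d => tp_mul T2 (a0 * c) (b * d)) t1
                   + tlift (T:=T2) (fun c d => tp_mul T2 (a0 * c) (b * d)) t2).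
    apply: functional_extensionality => a0; apply: functional_extensionality => b.
    exact: (tlift_lin (hin a0 b)).
  by rewrite tlift_comb.
Qed.

Lemma zmodA (M : zmodType) (A B C D E F : M) :
  A + B + (C + D) - (E + C + (B + F)) = A - E + (D - F).
Proof.
rewrite !opprD !addrA.
rewrite [A + B + C]addrAC [A + C + B + D]addrAC [A + C + D + B - E]addrAC [A + C + D - E + B - C]addrAC.
rewrite [A + C + D - E - C]addrAC [A + C + D - C]addrAC addrK addrK.
by rewrite [A + D - E]addrAC.
Qed.

Lemma zmodB (M : zmodType) (A B C D E F : M) :
  A + B - C - (D + E - F) = B - C + (F - E) + (A - D).
Proof.
rewrite !opprD opprK !addrA.
rewrite [A + B]addrC [B + A - C]addrAC [B - C + A - D]addrAC [B - C - D + A - E]addrAC.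
rewrite [B - C - D - E + A + F]addrAC [B - C - D - E]addrAC [B - C - E - D + F]addrAC.
rewrite [B - C - E + F - D + A]addrAC.
by rewrite [B - C - E + F]addrAC.
Qed.

Theorem proposition4p7 (K : fieldType) (H : algType K)
  (T2 : tensor_product H H) (T3 : tensor_product T2 H)
  (Delta : H -> T2) (eps : H -> K) (S : H -> H)
  (F : nat -> H -> Prop) (R : H -> H) :
  [pchar K] =i pred0 ->
  is_filtered_RB_hopf T3 Delta eps S F R ->
  (forall x, primitive Delta x -> primitive Delta (R x)) /\
  is_filtered_RB_Lie_sub (primitive Delta)
    (fun n x => F n x /\ primitive Delta x) R.
Proof.
move=> _ [[Hh [Fsub [F0 [Fdec [Fmul [FDel [Feps [FS Fker]]]]]]]] [[_ [_ [linR [DR [epsR RB]]]]] FR]].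
case: Hh => [lD [lE [lS [_ [cu1 [cu2 [D1 [DM [e1 [_ [an1 an2]]]]]]]]]]].
have bS : bilin (fun x y : H => S x * y).
  split=> [w|v] a x y /=; first by rewrite lS mulrDl -scalerAl.
  by rewrite mulrDr -scalerAr.
have bS' : bilin (fun x y : H => x * S y).
  split=> [w|v] a x y /=; first by rewrite mulrDl -scalerAl.
  by rewrite lS mulrDr -scalerAr.
have bE : bilin (fun x y : H => eps x *: y).
  split=> [w|v] a x y /=; first by rewrite lE scalerDl scalerA.
  by rewrite scalerDr !scalerA mulrC.
have bR : bilin (fun x y : H => tp_mul T2 (R x) (R y)).
  split=> [w|v] a x y /=; first by rewrite linR tpAl.
  by rewrite linR tpAr.
have bD2 : bilin (fun (u : H) (v : H) => tp_mul T3 (Delta u) v).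
  split=> [w|v] a x y /=; first by rewrite lD tpAl.
  by rewrite tpAr.
have eps0 : eps 0 = 0.
  have := lE 1 0 0; rewrite scale1r addr0 mul1r => h.
  by apply/(@addrI _ (eps 0)); rewrite addr0 -h.
have epsZ : forall a x, eps (a *: x) = a * eps x.
  by move=> a x; have := lE a x 0; rewrite addr0 eps0 addr0.
have tP : forall (U : lmodType K) (f : H -> H -> U) x, bilin f ->
    tlift (T:=T2) f (tp_mul T2 x 1 + tp_mul T2 1 x) = f x 1 + f 1 x.
  by move=> U f x hf; rewrite (linD (tlift_lin hf)) !tlift_mul.
have S1 : S 1 = 1.
  by have := an1 1; rewrite D1 tlift_mul // e1 scale1r mulr1.
have primE : forall x, primitive Delta x -> eps x = 0.
  move=> x Px; have := cu1 x; rewrite Px tP // e1 scale1r.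
  move=> h; have h2 : eps x *: (1 : H) = 0.
    by apply/(@addIr _ x); rewrite add0r.
  by have := congr1 eps h2; rewrite epsZ e1 mulr1 eps0.
have primS : forall x, primitive Delta x -> S x = - x.
  move=> x Px; have := an1 x; rewrite Px tP // S1 mulr1 mul1r primE // scale0r.
  by move/eqP; rewrite addr_eq0 => /eqP.
pose phi := fun (t a b c : H) => a * R b * t * S (R c).
have hpb : forall t c, bilin (fun a b => phi t a b c).
  move=> t c; rewrite /phi; split=> [w|v] a x y /=.
    by rewrite !mulrDl -!scalerAl.
  by rewrite linR mulrDr -scalerAr !mulrDl -!scalerAl.
have hpl : forall t a b, lin (phi t a b).
  by move=> t a b a' x y; rewrite /phi linR lS mulrDr -scalerAr.
have T3f : forall t, lin (tlift3 (T3:=T3) (phi t)) /\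
    forall a b c, tlift3 (T3:=T3) (phi t) (tp_mul T3 (tp_mul T2 a b) c) = phi t a b c.
  move=> t; have [hB hm] := @tlift3_mul _ _ _ T3 _ _ (hpb t) (hpl t).
  by split=> //; exact: (tlift_lin hB).
have D21 : Delta2 T3 Delta 1 = tp_mul T3 (tp_mul T2 1 1) 1.
  by rewrite /Delta2 D1 tlift_mul // D1.
have D2p : forall x, primitive Delta x -> Delta2 T3 Delta x =
   tp_mul T3 (tp_mul T2 x 1) 1 + tp_mul T3 (tp_mul T2 1 x) 1 + tp_mul T3 (tp_mul T2 1 1) x.
  by move=> x Px; rewrite /Delta2 Px tP // Px D1 tpDl.
have DR1 : Delta (R 1) = tp_mul T2 (R 1) (R 1) by rewrite DR D1 tlift_mul.
have SR1l : S (R 1) * R 1 = 1.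
  by have := an1 (R 1); rewrite DR1 tlift_mul // epsR e1 scale1r.
have SR1r : R 1 * S (R 1) = 1.
  by have := an2 (R 1); rewrite DR1 tlift_mul // epsR e1 scale1r.
have RR1 : R 1 * R 1 = R 1.
  rewrite RB D21 (T3f 1).2 /phi mul1r mulr1 SR1r //.
have R1 : R 1 = 1.
  have : S (R 1) * (R 1 * R 1) = S (R 1) * R 1 by rewrite RR1.
  by rewrite mulrA SR1l mul1r.
have primR : forall x, primitive Delta x -> primitive Delta (R x).
  by move=> x Px; rewrite /primitive DR Px tP // R1.
have RBp : forall x y, primitive Delta x -> primitive Delta y ->
    R x * R y = R (x * y + R x * y - y * R x).
  move=> x y Px Py; rewrite RB D2p // (linD (T3f y).1) (linD (T3f y).1) !(T3f y).2 /phi.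
  by rewrite R1 S1 (primS (R x) (primR x Px)) !mulr1 !mul1r mulrN.
have [tm [tl tr]] := tmul2_facts T2.
have tmDl : forall s1 s2 t : T2, tmul2 (s1 + s2) t = tmul2 s1 t + tmul2 s2 t.
  by move=> s1 s2 t; exact: (linD (tl t)).
have tmDr : forall s t1 t2 : T2, tmul2 s (t1 + t2) = tmul2 s t1 + tmul2 s t2.
  by move=> s t1 t2; exact: (linD (tr s)).
have commP : forall x y, primitive Delta x -> primitive Delta y ->
    primitive Delta (comm x y).
  move=> x y Px Py; rewrite /primitive /comm (linB lD) !DM Px Py.
  rewrite !tmDl !tmDr !tm !mulr1 !mul1r tpBl tpBr.
  exact: zmodA.
have psub : subspace (primitive Delta).
  split; first by rewrite /primitive (lin0 lD) tp0l tp0r addr0.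
  move=> a x y Px Py; rewrite /primitive lD Px Py tpAl tpAr scalerDr.
  by rewrite [X in X = _]addrACA.
split=> //.
split=> //.
split; first exact: commP.
split.
  move=> n _; split; last by move=> x [].
  split; first by split; [exact: (Fsub n).1 | exact: psub.1].
  move=> a x y [Fx Px] [Fy Py]; split; [exact: (Fsub n).2 | exact: psub.2].
split; first by move=> x Px; split=> //; apply/Fker; exact: primE.
split; first by move=> n x _ [Fx Px]; split=> //; exact: Fdec.
split.
  move=> n m x y _ _ [Fx Px] [Fy Py]; split; last exact: commP.
  rewrite /comm addrC -scaleN1r; apply: (Fsub (n + m)%N).2.
    by rewrite addnC; exact: Fmul.
  exact: Fmul.
split; first exact: primR.
split; first by move=> a x y _ _; exact: linR.
split.
  move=> x y Px Py; rewrite /comm (RBp x y Px Py) (RBp y x Py Px) -(linB linR).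
  by congr R; exact: zmodB.
by move=> n x _ [Fx Px]; split; [exact: FR | exact: primR].
Qed.
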